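(* Let $H$ be a nontrivial finite group of odd order and let $P$ be a position of $\mathsf{GEN}(H)$ (i.e. a subset of $H$ obtainable from $\emptyset$ by a sequence of legal moves). Let $m=\delta_H(P)$. Then - if $m=0$, then $\operatorname{nim}(P)=0$; - if $m=1$, then $\operatorname{nim}(P)=2$ if $|P|$ is even and $\operatorname{nim}(P)=1$ if $|P|$ is odd; - if $m=2$, then $\operatorname{nim}(P)=2$ if $|P|$ is even and $\operatorname{nim}(P)=0$ if $|P|$ is odd; - if $m\ge 3$, then $\operatorname{nim}(P)=1$ if $|P|$ is even and $\operatorname{nim}(P)=0$ if $|P|$ is odd.
   Context: For a finite group $G$, $\mathsf{GEN}(G)$ is the following impartial two-player game. A position is a set of elements selected so far; the starting position is $\emptyset$. From a position $P$ with $\langle P\rangle\neq G$, the player to move selects some $g\in G\setminus P$, producing the position $P\cup\{g\}$ (these are the options of $P$); a position $P$ with $\langle P\rangle = G$ has no options. The nim-number of a position is defined recursively by $\operatorname{nim}(P)=\operatorname{mex}\{\operatorname{nim}(Q): Q \text{ an option of } P\}$, where $\operatorname{mex}(A)$ is the least nonnegative integer not in $A$. The deficiency $\delta_G(P)$ of a subset $P\subseteq G$ is the minimum size of a subset $Q\subseteq G$ such that $\langle P\cup Q\rangle = G$. *)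

(* Defs.v *)
From mathcomp Require Import all_boot all_fingroup.
Set Implicit Arguments. Unset Strict Implicit. Unset Printing Implicit Defensive.
Local Open Scope group_scope.

(* mex of a finite list of naturals: the least n not occurring in s.
   Such an n exists among 0..size s, and since iota 0 k lists 0,1,..,k-1
   in order, the index returned by find equals that least value. *)
Definition mex (s : seq nat) : nat :=
  find (fun n => n \notin s) (iota 0 (size s).+1).

Section Gen.
Variable gT : finGroupType.
Variable G : {group gT}.

Inductive gen_position : {set gT} -> Prop :=
| gen_pos0 : gen_position set0
| gen_posS (P : {set gT}) (g : gT) :
    gen_position P -> <<P>> != (G : {set gT}) -> g \in G -> g \notin P ->
    gen_position (g |: P).

(* Nim-number, computed by fuel-bounded recursion: with fuel k the options of
   P are g |: P for g in G :\: P (when <<P>> <> G), each of which is evaluated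
   with fuel k-1.  Since each move strictly shrinks G :\: P, fuel #|G| suffices
   for every P \subset G. *)
Fixpoint nim_aux (k : nat) (P : {set gT}) : nat :=
  match k with
  | 0 => 0
  | k'.+1 =>
      if <<P>> == (G : {set gT}) then 0
      else mex [seq nim_aux k' (g |: P) | g in G :\: P]
  end.

Definition nim (P : {set gT}) : nat := nim_aux #|G| P.

(* Deficiency: least size of Q \subset G with <<P :|: Q>> = G
   (Q = G always qualifies for P \subset G, so #|G| is a harmless default). *)
Definition deficiency (P : {set gT}) : nat :=
  \big[minn/#|G|]_(Q : {set gT} | (Q \subset G) && (<<P :|: Q>> == (G : {set gT}))) #|Q|.

End Gen.

(* Main.v *)
Require Import Defs.
From mathcomp Require Import all_boot all_fingroup.
From mathcomp Require Import zify.
Set Implicit Arguments. Unset Strict Implicit. Unset Printing Implicit Defensive.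
Local Open Scope group_scope.

Lemma mexP (s : seq nat) n :
  (forall i, (i < n)%N -> i \in s) -> n \notin s -> mex s = n.
Proof.
move=> Hin Hn.
have Hsz : (n <= size s)%N.
  have := @uniq_leq_size _ (iota 0 n) s (iota_uniq 0 n).
  rewrite size_iota; apply => i; rewrite mem_iota add0n => /andP[_]; exact: Hin.
rewrite /mex; set t := iota 0 (size s).+1.
have Hlt : (n < size t)%N by rewrite size_iota ltnS.
have Hle : (find (fun n => n \notin s) t <= n)%N.
  rewrite leqNgt; apply/negP => /(before_find 0).
  by rewrite nth_iota ?ltnS // add0n (negbTE Hn).
have Hhas : has (fun n => n \notin s) t.
  by apply/hasP; exists n => //; rewrite mem_iota add0n.
have Hfl : (find (fun n => n \notin s) t < (size s).+1)%N.
  by have := leq_ltn_trans Hle Hlt; rewrite size_iota.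
have := nth_find 0 Hhas; rewrite /t (nth_iota 0 0 Hfl) add0n => Hf.
move: Hle; rewrite leq_eqVlt => /orP[/eqP //|Hl].
by rewrite Hin in Hf.
Qed.

Section Main.
Variable gT : finGroupType.
Variable H : {group gT}.

Definition dpred (P Q : {set gT}) := (Q \subset H) && (<<P :|: Q>> == (H : {set gT})).

Lemma def_le (P Q : {set gT}) : Q \subset H -> <<P :|: Q>> = H -> (deficiency H P <= #|Q|)%N.
Proof.
move=> sQ gQ; rewrite /deficiency.
have pQ : (Q \subset H) && (<<P :|: Q>> == (H : {set gT})) by rewrite sQ gQ eqxx.
have : Q \in index_enum {set gT} by rewrite mem_index_enum.
elim: (index_enum _) => // R r IH; rewrite in_cons big_cons.
case/orP => [/eqP <-|/IH Hr]; first by rewrite pQ geq_minl.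
case: ifP => // _; exact: leq_trans (geq_minr _ _) Hr.
Qed.

Lemma def_ex (P : {set gT}) : P \subset H -> exists2 Q : {set gT}, (Q \subset H) && (<<P :|: Q>> == (H : {set gT}))
   & #|Q| = deficiency H P.
Proof.
move=> sP; rewrite /deficiency.
apply: (big_ind (fun x => exists2 Q : {set gT}, (Q \subset H) && (<<P :|: Q>> == (H : {set gT})) & #|Q| = x)).
- exists (H : {set gT}) => //; rewrite subxx /=.
  by move/setUidPr: sP => ->; rewrite genGid.
- move=> x y [Q1 h1 e1] [Q2 h2 e2]; rewrite /minn; case: ifP => _.
  + by exists Q1.
  + by exists Q2.
- by move=> Q hQ; exists Q.
Qed.

Lemma gen_eqH (A B : {set gT}) : A \subset H -> B \subset A -> <<B>> = H -> <<A>> = H.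
Proof.
move=> sA sBA gB; apply/eqP; rewrite eqEsubset gen_subG sA /=.
by rewrite -{1}gB genS.
Qed.

Lemma def0 (P : {set gT}) : P \subset H -> (deficiency H P == 0%N) = (<<P>> == (H : {set gT})).
Proof.
move=> sP; apply/eqP/eqP => [|gP].
  case: (def_ex sP) => Q /andP[_ /eqP gQ] e0 d0.
  move: e0; rewrite d0 => /eqP; rewrite cards_eq0 => /eqP eQ.
  by move: gQ; rewrite eQ setU0.
by apply/eqP; rewrite -leqn0 -(cards0 gT); apply: def_le; rewrite ?sub0set ?setU0.
Qed.

Lemma def_add_le (P : {set gT}) (g : gT) : g \in H -> P \subset H -> (deficiency H (g |: P) <= deficiency H P)%N.
Proof.
move=> gH sP; case: (def_ex sP) => Q /andP[sQ /eqP gQ] <-.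
apply: def_le => //; apply: gen_eqH gQ.
  by rewrite !subUset sub1set gH sP sQ.
by rewrite setSU // subsetUr.
Qed.

Lemma def_add_ge (P : {set gT}) (g : gT) : g \in H -> P \subset H -> (deficiency H P <= (deficiency H (g |: P)).+1)%N.
Proof.
move=> gH sP; have sgP : g |: P \subset H by rewrite subUset sub1set gH.
case: (def_ex sgP) => Q /andP[sQ /eqP gQ] <-.
apply: (@leq_trans #|g |: Q|); last by rewrite cardsU1; case: (g \notin Q).
apply: def_le; first by rewrite subUset sub1set gH.
by rewrite setUCA setUA.
Qed.

Lemma def_add_ex (P : {set gT}) : P \subset H -> (0 < deficiency H P)%N ->
  exists2 g, g \in H :\: P & deficiency H (g |: P) = (deficiency H P).-1.
Proof.
move=> sP dpos; case: (def_ex sP) => Q /andP[sQ /eqP gQ] eQ.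
have : (0 < #|Q|)%N by rewrite eQ.
rewrite card_gt0 => /set0Pn [g gQ'].
have gH' : g \in H by apply: (subsetP sQ).
have eU : P :|: Q = (g |: P) :|: (Q :\ g).
  by rewrite -setUA setUCA setD1K.
have le1 : (deficiency H (g |: P) <= #|Q :\ g|)%N.
  apply: def_le; first by apply: subset_trans (subD1set _ _) sQ.
  by rewrite -eU.
have Hc := cardsD1 g Q; rewrite gQ' add1n in Hc.
have gnP : g \notin P.
  apply/negP => gP.
  have : (deficiency H P <= #|Q :\ g|)%N.
    apply: def_le; first by apply: subset_trans (subD1set _ _) sQ.
    have eP : g |: P = P by apply/setUidPr; rewrite sub1set.
    by move: eU; rewrite eP => <-.
  by rewrite -eQ Hc ltnn.
exists g; first by rewrite inE gH' gnP.
have sgP : g |: P \subset H by rewrite subUset sub1set gH'.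
have := def_add_ge gH' sP.
move: le1; rewrite -eQ Hc /= => a b.
by apply/eqP; rewrite eqn_leq a /= -ltnS.
Qed.

Lemma def_same (P : {set gT}) (g : gT) : g \in <<P>> -> deficiency H (g |: P) = deficiency H P.
Proof.
move=> gP; rewrite /deficiency; apply: eq_bigl => Q.
suff -> : <<(g |: P) :|: Q>> = <<P :|: Q>> by [].
have sPQ : P :|: Q \subset <<P :|: Q>> by apply: subset_gen.
apply/eqP; rewrite eqEsubset (genS (setSU _ (subsetUr _ _))) andbT gen_subG.
rewrite -setUA subUset sub1set (subsetP (genS (subsetUl P Q))) //=.
Qed.

Lemma even_ex (P : {set gT}) : P \subset H -> odd #|H| -> ~~ odd #|P| ->
  exists2 g, g \in H :\: P & g \in <<P>>.
Proof.
move=> sP oH eP.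
case: (boolP [exists g, (g \in <<P>>) && (g \notin P)]).
  case/existsP => g /andP[g1 g2]; exists g => //.
  by rewrite inE g2 (subsetP _ _ g1) // gen_subG.
rewrite negb_exists => /forallP hall.
have eq : <<P>> = P.
  apply/eqP; rewrite eqEsubset subset_gen andbT; apply/subsetP => g gg.
  by move: (hall g); rewrite gg /= negbK.
have : #|<<P>>| %| #|H| by apply: cardSg; rewrite gen_subG.
case/dvdnP => k hk; move: oH; rewrite hk oddM eq => /andP[_ oP].
by rewrite oP in eP.
Qed.

Definition F (m : nat) (b : bool) : nat :=
  (match m with 0 => 0 | 1 => if b then 1 else 2 | 2 => if b then 0 else 2
  | _ => if b then 0 else 1 end)%N.

Lemma key k : forall P : {set gT}, P \subset H -> odd #|H| -> (#|H :\: P| <= k)%N ->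
  nim_aux H k P = F (deficiency H P) (odd #|P|).
Proof.
elim: k => [|k IH] P sP oH hk.
  have eP : P = H.
    apply/eqP; rewrite eqEsubset sP -setD_eq0 -cards_eq0.
    by rewrite -leqn0.
  by have := def0 sP; rewrite {2}eP genGid eqxx => /eqP ->.
rewrite /=; case: ifP => gP.
  by have := def0 sP; rewrite gP => /eqP ->.
set s := [seq _ | _ in _].
set m := deficiency H P; set b := odd #|P|.
have m0 : (0 < m)%N by rewrite lt0n /m def0 // gP.
have opt : forall g, g \in H :\: P -> nim_aux H k (g |: P) = F (deficiency H (g |: P)) (~~ b).
  move=> g gHP; have := gHP; rewrite inE => /andP[gnP gH].
  rewrite IH //; first by rewrite cardsU1 gnP /b add1n.
  - by rewrite subUset sub1set gH.
  - rewrite setUC -setDDl; have := cardsD1 g (H :\: P); rewrite gHP add1n => Hc.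
    by rewrite -ltnS -Hc.
have mem_lo : F m.-1 (~~ b) \in s.
  case: (def_add_ex sP m0) => g gHP e.
  by rewrite -e -opt //; apply: image_f.
have mem_hi : ~~ b -> F m (~~ b) \in s.
  move=> nb; case: (even_ex sP oH nb) => g gHP gg.
  by rewrite /m -(def_same gg) -opt //; apply: image_f.
have sub : forall x, x \in s -> x = F m.-1 (~~ b) \/ x = F m (~~ b).
  move=> x /imageP [g gHP ->]; rewrite opt //.
  have := gHP; rewrite inE => /andP[_ gH].
  have le := def_add_le gH sP; have ge := def_add_ge gH sP.
  case: (ltngtP (deficiency H (g |: P)) m) => [lt|gt|->]; last by right.
    by left; congr F; move: lt ge; rewrite /m; move: (deficiency H (g |: P)) (deficiency H P) => a c; lia.
  by move: le; rewrite leqNgt -/m gt.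
move: m0 mem_lo mem_hi sub; clear opt; case: m => [|[|[|m']]] // _; case: b => /= lo hi sb.
- apply: mexP => [[|i]|] //; apply/negP => /sb; by case.
- have h1 := hi isT; apply: mexP => [[|[|i]]|] //; apply/negP => /sb; by case.
- apply: mexP => [[|i]|] //; apply/negP => /sb; by case.
- have h1 := hi isT; apply: mexP => [[|[|i]]|] //; apply/negP => /sb; by case.
- apply: mexP => [[|i]|] //; apply/negP => /sb; by case: m' lo hi sb => [|m'] /= ? ? ? [].
- apply: mexP => [[|i]|] //; apply/negP => /sb; by case: m' lo hi sb => [|m'] /= ? ? ? [].
Qed.

Lemma pos_sub (P : {set gT}) : gen_position H P -> P \subset H.
Proof.
elim => [|Q g _ IH _ gH _]; first exact: sub0set.
by rewrite subUset sub1set gH.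
Qed.

End Main.

Theorem mainTheorem3 (gT : finGroupType) (H : {group gT}) (P : {set gT}) :
  H :!=: 1%G -> odd #|H| -> gen_position H P ->
  [/\ deficiency H P = 0%N -> nim H P = 0%N,
      deficiency H P = 1%N -> nim H P = (if odd #|P| then 1 else 2)%N,
      deficiency H P = 2%N -> nim H P = (if odd #|P| then 0 else 2)%N
    & (3 <= deficiency H P)%N -> nim H P = (if odd #|P| then 0 else 1)%N].
Proof.
move=> _ oH gp; have sP := pos_sub gp.
have e : nim H P = F (deficiency H P) (odd #|P|).
  by apply: key => //; apply: subset_leq_card; apply: subsetDl.
rewrite e; split => [->|->|->|] //.
by case: (deficiency H P) => [|[|[|d]]].
Qed.
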